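(* Let $\Xi\subset\mathbb M$ be finite with separation distance $q$, let $c>0$ and $r\ge2q$. Then for any $\eta\in\mathbb M$, $$\sum_{\substack{\xi\in\Xi\\ \mathrm{dist}(\xi,\eta)>r}}e^{-c\,\mathrm{dist}(\xi,\eta)}\le\frac{\beta_{\mathbb M}}{\alpha_{\mathbb M}}\Big(\frac rq\Big)^de^{-cr}\Big(\sum_{j=0}^\infty(j+2)^de^{-cjq}\Big).$$
   Context: $\mathbb M$ is a compact $d$-dimensional Riemannian manifold without boundary with volume measure $\mu$ and geodesic distance $\mathrm{dist}$; $0<\alpha_{\mathbb M}\le\beta_{\mathbb M}$ are constants such that $\alpha_{\mathbb M}r^d\le\mu(B(x,r))\le\beta_{\mathbb M}r^d$ for all $x\in\mathbb M$ and $0<r<\mathrm{diam}(\mathbb M)$. The separation distance of finite $\Xi$ is $q=\frac12\min_{\zeta\in\Xi}\mathrm{dist}(\zeta,\Xi\setminus\{\zeta\})$. *)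

(* Defs.v *)
From HB Require Import structures.
From mathcomp Require Import all_boot all_order all_algebra.
From mathcomp Require Import all_classical all_reals all_analysis.
Set Implicit Arguments. Unset Strict Implicit. Unset Printing Implicit Defensive.
Import Order.TTheory GRing.Theory Num.Theory.
Local Open Scope classical_set_scope.
Local Open Scope ring_scope.

Definition is_metric (R : realType) (T : Type) (dist : T -> T -> R) : Prop :=
  (forall x y, 0 <= dist x y) /\
  (forall x y, dist x y = 0 <-> x = y) /\
  (forall x y, dist x y = dist y x) /\
  (forall x y z, dist x z <= dist x y + dist y z).

Definition mball (R : realType) (T : Type) (dist : T -> T -> R) (x : T) (r : R)
  : set T := [set y | dist x y < r].

Definition mdiam (R : realType) (T : Type) (dist : T -> T -> R) : R :=
  sup [set dist x y | x in [set: T] & y in [set: T]].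

Definition sepdist (R : realType) (T : eqType) (dist : T -> T -> R) (Xi : seq T) : R :=
  2^-1 * inf [set inf [set dist zeta z | z in [set z | z \in Xi /\ z != zeta]]
             | zeta in [set zeta | zeta \in Xi]].

(* Main.v *)
Require Import Defs.
From HB Require Import structures.
From mathcomp Require Import all_boot all_order all_algebra.
From mathcomp Require Import all_classical all_reals all_analysis.
From mathcomp Require Import ring lra.
Import Order.TTheory GRing.Theory Num.Theory.
Local Open Scope classical_set_scope.
Local Open Scope ring_scope.

Lemma bigmin_le_seq (R : realType) (I : eqType) (s : seq I) (P : pred I)
  (F : I -> R) a x : x \in s -> P x ->
  \big[Order.min/a]_(i <- s | P i) F i <= F x.
Proof.
elim: s => //= y s IH; rewrite in_cons big_cons => /orP[/eqP<-|xs] Px.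
  by rewrite Px ge_min lexx.
by case: ifP => _; [rewrite ge_min IH ?orbT|exact: IH].
Qed.

Lemma bigsetU_mem (T : Type) (I : eqType) (s : seq I) (P : pred I) (B : I -> set T) y :
  (\big[setU/set0]_(i <- s | P i) B i) y -> exists i, i \in s /\ P i /\ B i y.
Proof.
elim: s => [|x s IH]; first by rewrite big_nil.
rewrite big_cons; case: ifP => Px.
  by move=> [bx|/IH [i [hi bi]]]; [exists x; rewrite mem_head|exists i; rewrite in_cons hi orbT].
by move=> /IH [i [hi bi]]; exists i; rewrite in_cons hi orbT.
Qed.

Arguments bigsetU_mem {T I s P B y}.

Lemma sum_mu_disj (R : realType) d (T : measurableType d)
  (mu : {measure set T -> \bar R}) (I : eqType) (s : seq I) (P : pred I)
  (B : I -> set T) :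
  uniq s -> (forall i, measurable (B i)) ->
  {in s &, forall i j, i != j -> B i `&` B j = set0} ->
  measurable (\big[setU/set0]_(i <- s | P i) B i) /\
  (\sum_(i <- s | P i) mu (B i) = mu (\big[setU/set0]_(i <- s | P i) B i))%E.
Proof.
move=> + mB; elim: s => [|x s IH] /=.
  by rewrite !big_nil measure0; split.
move=> /andP[xs us] dis.
have [m e] := IH us (fun i j hi hj => dis i j (@mem_behead _ (x :: s) _ hi) (@mem_behead _ (x :: s) _ hj)).
rewrite !big_cons; case: ifP => Px; last by [].
split; first exact: measurableU.
rewrite measureU //; first by rewrite e.
apply/seteqP; split => y //= [bx].
move=> hy; have [i [hi [_ bi]]] := bigsetU_mem hy.
have xi : x != i.
  by apply/negP => /eqP xi; move: xs; rewrite xi; by rewrite hi.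
have := dis _ _ (mem_head _ _) (@mem_behead _ (x :: s) _ hi) xi; move/seteqP => [h _].
exact: (h y (conj bx bi)).
Qed.

Lemma two_distinct (T : eqType) (s : seq T) : uniq s -> (2 <= size s)%N ->
  exists a b, a \in s /\ b \in s /\ a != b.
Proof.
case: s => [|a [|b s]] //= /andP[].
rewrite in_cons negb_or => /andP[hab _] _ _; exists a, b.
by rewrite !in_cons !eqxx ?orbT.
Qed.
Arguments bigmin_le_seq {R I s P F a x}.
Arguments sum_mu_disj {R d T} mu {I s} P B.

Theorem lemma7p1 (R : realType) (disp : measure_display) (T : measurableType disp)
  (mu : {measure set T -> \bar R}) (dist : T -> T -> R) (dim : nat)
  (alphaM betaM : R)
  (hmetric : is_metric dist)
  (hbounded : exists B : R, forall x y, dist x y <= B)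
  (hballs : forall x r, measurable (mball dist x r))
  (halpha : 0 < alphaM) (halphabeta : alphaM <= betaM)
  (hvol : forall x r, 0 < r -> r < mdiam dist ->
     ((alphaM * r ^+ dim)%:E <= mu (mball dist x r))%E /\
     (mu (mball dist x r) <= (betaM * r ^+ dim)%:E)%E)
  (htotal : (mu [set: T] <= (betaM * (mdiam dist) ^+ dim)%:E)%E)
  (Xi : seq T) (huniq : uniq Xi) (hsize : (2 <= size Xi)%N)
  (c r : R) (hc : 0 < c) (hr : 2 * sepdist dist Xi <= r) (eta : T) :
  ((\sum_(xi <- Xi | r < dist xi eta) expR (- (c * dist xi eta)))%:E <=
   (betaM / alphaM * (r / sepdist dist Xi) ^+ dim * expR (- (c * r)))%:E *
   (\sum_(0 <= j <oo) (((j + 2)%:R) ^+ dim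
                        * expR (- (c * j%:R * sepdist dist Xi)))%:E))%E.
Proof.
have [d0 [deq [dsym dtri]]] := hmetric.
have dxx : forall x, dist x x = 0 by move=> x; apply/deq.
have hub : forall x y, dist x y <= mdiam dist.
  move=> x y; have [B hB] := hbounded.
  apply: ub_le_sup; last by exists x => //; exists y.
  by exists B => _ [a _ [b _ <-]]; exact: hB.
have [a [b [ha [hb hab]]]] : exists a b, a \in Xi /\ b \in Xi /\ a != b.
  exact: two_distinct.
pose S x := [set dist x z | z in [set z | z \in Xi /\ z != x]].
pose O := [set inf (S zeta) | zeta in [set zeta | zeta \in Xi]].
have h2q : 2 * sepdist dist Xi = inf O.
  by rewrite /sepdist /O /S mulrA divff ?mul1r // pnatr_eq0.
have Sne : forall x, x \in Xi -> nonempty (S x).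
  move=> x hx; case: (eqVneq x a) => [->|xa].
    by exists (dist a b); exists b => //; split => //; rewrite eq_sym.
  by exists (dist x a); exists a => //; split => //; rewrite eq_sym.
have Slb : forall x, has_lbound (S x).
  by move=> x; exists 0 => _ [z _ <-]; exact: d0.
have Sinf0 : forall x, x \in Xi -> 0 <= inf (S x).
  by move=> x hx; apply: lb_le_inf (Sne x hx) _ => _ [z _ <-]; exact: d0.
have Olb : has_lbound O by exists 0 => _ [z hz <-]; exact: Sinf0.
have key : forall x y, x \in Xi -> y \in Xi -> x != y ->
    2 * sepdist dist Xi <= dist x y.
  move=> x y hx hy xy; rewrite h2q.
  apply: (le_trans (ge_inf Olb _)); first by exists x.
  by apply: ge_inf => //; exists y => //; split => //; rewrite eq_sym.
set q := sepdist dist Xi in h2q key hr *.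
have qpos : 0 < q.
  pose m := \big[Order.min/1]_(x <- Xi) \big[Order.min/1]_(y <- Xi | y != x) dist x y.
  have m0 : 0 < m.
    apply: (big_ind (fun v : R => 0 < v)) => //; first by move=> u v hu hv; rewrite lt_min hu hv.
    move=> x _; apply: (big_ind (fun v : R => 0 < v)) => //; first by move=> u v hu hv; rewrite lt_min hu hv.
    move=> y yx; rewrite lt_neqAle d0 andbT eq_sym; apply/eqP => /deq xy.
    by move: yx; rewrite xy eqxx.
  have mS : forall x, x \in Xi -> m <= inf (S x).
    move=> x hx; apply: lb_le_inf (Sne x hx) _ => _ [z [hz hzx] <-].
    apply: le_trans (bigmin_le_seq hx isT) _.
    exact: bigmin_le_seq hz hzx.
  have : m <= inf O.
    apply: lb_le_inf; first by exists (inf (S a)); exists a.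
    by move=> _ [z hz <-]; exact: mS.
  lra.
have hqdiam : q < mdiam dist.
  have := key a b ha hb hab; have := hub a b; lra.
have hball : forall R0, 0 < R0 ->
    (mu (mball dist eta R0) <= (betaM * R0 ^+ dim)%:E)%E.
  move=> R0 R00; case: (ltP R0 (mdiam dist)) => h.
    exact: (hvol eta R0 R00 h).2.
  apply: le_trans (le_measure _ _ _ (subsetT _)) _; rewrite ?inE //.
  apply: le_trans htotal _; rewrite lee_fin.
  apply: ler_wpM2l; first lra.
  apply: lerXn2r => //; rewrite nnegrE; last lra.
  exact: le_trans (d0 eta eta) (hub eta eta).
have hcount : forall (Q : pred T) s0, 0 < s0 ->
    (forall x, x \in Xi -> Q x -> dist x eta < s0) ->
    (\sum_(x <- Xi | Q x) 1) * (alphaM * q ^+ dim) <= betaM * (s0 + q) ^+ dim.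
  move=> Q s0 s00 hQ.
  rewrite -lee_fin big_distrl /=.
  under eq_bigr do rewrite mul1r.
  rewrite -sumEFin.
  apply: le_trans (@lee_sum _ _ (fun x => (alphaM * q ^+ dim)%:E)
     (fun x => mu (mball dist x q)) Xi Q (fun x _ => (hvol x q qpos hqdiam).1)) _.
  have hdis : {in Xi &, forall i j, i != j -> mball dist i q `&` mball dist j q = set0}.
    move=> i j hi hj ij; apply/seteqP; split => y //= [].
    rewrite /mball /= => h1 h2.
    have := key i j hi hj ij; have := dtri i y j; rewrite (dsym y j); lra.
  have [mU e] := sum_mu_disj mu Q (fun x => mball dist x q) huniq (hballs^~ q) hdis.
  rewrite e; apply: le_trans (hball (s0 + q) _); last lra.
  apply: le_measure; rewrite ?inE //.
  move=> y /bigsetU_mem [i [hi [Qi]]]; rewrite /mball /= => hy.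
  have := hQ i hi Qi; have := dtri eta i y; rewrite (dsym eta i); lra.
pose k x := Num.truncn ((dist x eta - r) / q).
have hk : forall x, r < dist x eta ->
    r + (k x)%:R * q <= dist x eta /\ dist x eta < r + (k x)%:R * q + q.
  move=> x hx; have t0 : 0 <= (dist x eta - r) / q.
    by apply: divr_ge0; lra.
  have /andP[h1 h2] := truncn_itv t0.
  rewrite -/(k x) mulrSr in h1 h2.
  have e : (dist x eta - r) / q * q = dist x eta - r by rewrite divfK // lt0r_neq0.
  move: h1 h2 e; set t := (dist x eta - r) / q; set kk := (k x)%:R => h1 h2 e.
  split; nra.
pose N := (\max_(x <- Xi) k x).+1.
pose g (j : nat) := expR (- (c * r)) * expR (- (c * j%:R * q)).
pose K := betaM / alphaM * (r / q) ^+ dim * expR (- (c * r)).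
pose A (j : nat) := ((j + 2)%:R) ^+ dim * expR (- (c * j%:R * q)).
have hA0 : forall j, 0 <= A j.
  by move=> j; apply: mulr_ge0; [apply: exprn_ge0; apply: ler0n|apply: expR_ge0].
have hK0 : 0 <= K.
  apply: mulr_ge0; last exact: expR_ge0.
  apply: mulr_ge0; first by apply: divr_ge0; lra.
  by apply: exprn_ge0; apply: divr_ge0; lra.
have main : \sum_(xi <- Xi | r < dist xi eta) expR (- (c * dist xi eta))
    <= \sum_(0 <= j < N) K * A j.
  rewrite big_seq_cond.
  apply: (le_trans (y := \sum_(xi <- Xi | (xi \in Xi) && (r < dist xi eta))
             \sum_(0 <= j < N | j == k xi) g j)).
    apply: ler_sum => x /andP[xX hx].
    have kN : (k x < N)%N by rewrite ltnS; exact: (leq_bigmax_seq _ xX).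
    rewrite big_nat1_eq leq0n kN /= /g -expRD ler_expR.
    have [h1 _] := hk x hx; nra.
  rewrite (exchange_big_dep xpredT) //=.
  apply: ler_sum => j _.
  set Q := (fun i => ((i \in Xi) && (r < dist i eta)) && (j == k i)).
  have -> : \sum_(i <- Xi | Q i) g j = (\sum_(i <- Xi | Q i) 1) * g j.
    by rewrite big_distrl /=; apply: eq_bigr => i _; rewrite mul1r.
  set n := \sum_(i <- Xi | Q i) 1.
  have j0 : 0 <= (j%:R : R) by apply: ler0n.
  have hn : n * (alphaM * q ^+ dim) <= betaM * (r + j%:R * q + q + q) ^+ dim.
    apply: hcount; first nra.
    move=> x _ /andP[/andP[_ hx] /eqP ->].
    by have [_ h2] := hk x hx.
  have hj2 : (j + 2)%:R = (j%:R + 2 : R) by rewrite natrD.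
  pose M := betaM / alphaM * (r / q) ^+ dim * ((j + 2)%:R) ^+ dim.
  have aq0 : 0 < alphaM * q ^+ dim by apply: mulr_gt0 => //; apply: exprn_gt0.
  have hM : M * (alphaM * q ^+ dim) = betaM * (r * (j + 2)%:R) ^+ dim.
    have e1 : (r * (j + 2)%:R) ^+ dim = r ^+ dim * (j + 2)%:R ^+ dim by rewrite exprMn.
    rewrite /M e1 expr_div_n; field.
    by rewrite !lt0r_neq0 ?exprn_gt0.
  have hnM : n <= M.
    rewrite -(ler_pM2r aq0) hM; apply: le_trans hn _.
    apply: ler_wpM2l; first lra.
    apply: lerXn2r; rewrite ?nnegrE; [nra|nra|].
    rewrite hj2; nra.
  have g0 : 0 <= g j by apply: mulr_ge0; apply: expR_ge0.
  apply: le_trans (ler_wpM2r g0 hnM) _.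
  suff -> : M * g j = K * A j by [].
  by rewrite /M /K /A /g; ring.
apply: (le_trans (y := (\sum_(0 <= j < N) K * A j)%:E)); first by rewrite lee_fin.
rewrite -mulr_sumr EFinM; apply: lee_wpmul2l; first by rewrite lee_fin.
rewrite -sumEFin; apply: (nneseries_lim_ge (P := xpredT)) => n _ _.
by rewrite lee_fin.
Qed.
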